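(* Let $\Gamma$ be the graph with vertex set $\{v_{n,k}: n\in\mathbb Z,\ k\in\mathbb Z/10\mathbb Z\}$ and edge set $\{v_{n,k}v_{n,k+1}\}\cup\{v_{n,2k+1}v_{n+1,4k+2}\}$ ($n\in\mathbb Z$, $k\in\mathbb Z/10\mathbb Z$). Then every automorphism $\phi$ of $\Gamma$ is uniquely determined by the pair $(\phi(v_{0,1}),\phi(v_{0,2}))$.
   Context: Indices $k$ are taken modulo 10. *)

(* Defs.v *)
From mathcomp Require Import all_boot all_order all_algebra.
Set Implicit Arguments. Unset Strict Implicit. Unset Printing Implicit Defensive.
Import GRing.Theory.
Local Open Scope ring_scope.

Definition vertex : Type := (int * 'Z_10)%type.

Definition v (n : int) (k : 'Z_10) : vertex := (n, k).

Definition gedge (x y : vertex) : Prop :=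
  (exists (n : int) (k : 'Z_10), x = v n k /\ y = v n (k + 1)) \/
  (exists (n : int) (k : 'Z_10), x = v n (k *+ 2 + 1) /\ y = v (n + 1) (k *+ 4 + 2)).

Definition adj (x y : vertex) : Prop := gedge x y \/ gedge y x.

Definition is_automorphism (phi : vertex -> vertex) : Prop :=
  bijective phi /\ (forall x y, adj x y <-> adj (phi x) (phi y)).

(* Main.v *)
Require Import Defs.
From mathcomp Require Import all_boot all_order all_algebra.
Set Implicit Arguments. Unset Strict Implicit. Unset Printing Implicit Defensive.
Import GRing.Theory.
Local Open Scope ring_scope.

Definition rung (x : vertex) : vertex :=
  if odd x.2 then (x.1 + 1, x.2 *+ 2) else (x.1 - 1, x.2 *+ 3 + 5).
Definition nbrs (x : vertex) : seq vertex :=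
  [:: (x.1, x.2 + 1); (x.1, x.2 - 1); rung x].
Definition adjb (x y : vertex) : bool := y \in nbrs x.

Definition cyc8 (u : seq vertex) : bool :=
  [&& size u == 8%N, uniq u & cycle adjb u].

Fixpoint walks (m : nat) (x : vertex) : seq (seq vertex) :=
  if m is m'.+1 then flatten [seq [seq y :: t | t <- walks m' y] | y <- nbrs x]
  else [:: [::]].

Definition Pb4 w a b c := has (fun t => cyc8 ([:: w; a; b; c] ++ t)) (walks 4 c).


Arguments rung : simpl never.
Arguments nbrs : simpl never.

Definition bodyF1 (k : 'Z_10) :=
  ~~ Pb4 (rung (0, k - 1)) (0, k - 1) (0, k) (rung (0, k)).
Definition bodyF2 (k : 'Z_10) :=
  all (fun w => (w == (0, k)) || Pb4 w (0, k - 1) (0, k) (0, k + 1)) (nbrs (0, k - 1)).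

Definition Z10s : seq 'Z_10 := [:: 0;1;2;3;4;5;6;7;8;9].
Lemma memZ10 (k : 'Z_10) : k \in Z10s.
Proof.
rewrite -(natr_Zp k).
case: k => [[|[|[|[|[|[|[|[|[|[|m]]]]]]]]]] Hm] //=; by rewrite !inE eqxx ?orbT.
Qed.
Lemma allZ (P : pred 'Z_10) : all P Z10s -> forall k, P k.
Proof. move=> /allP H k; apply: H; exact: memZ10. Qed.

Lemma F1_ok : all bodyF1 Z10s. Proof. vm_compute. reflexivity. Qed.
Lemma F2_ok : all bodyF2 Z10s. Proof. vm_compute. reflexivity. Qed.

Lemma Z1_ok : all (fun k : 'Z_10 => odd (k *+ 2 + 1 : 'Z_10)%R && ((k *+ 2 + 1) *+ 2 == k *+ 4 + 2)) Z10s.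
Proof. vm_compute. reflexivity. Qed.
Lemma Z2_ok : all (fun k : 'Z_10 => ~~ odd (k *+ 4 + 2 : 'Z_10)%R && ((k *+ 4 + 2) *+ 3 + 5 == k *+ 2 + 1)) Z10s.
Proof. vm_compute. reflexivity. Qed.
Lemma Z3_ok : all (fun k : 'Z_10 => odd k ==>
   (((k - 1) *+ 3) *+ 2 + 1 == k) && (k *+ 2 == ((k - 1) *+ 3) *+ 4 + 2)) Z10s.
Proof. vm_compute. reflexivity. Qed.
Lemma Z4_ok : all (fun k : 'Z_10 => ~~ odd k ==>
   (((k *+ 3 + 4) *+ 3) *+ 2 + 1 == k *+ 3 + 5) && (k == ((k *+ 3 + 4) *+ 3) *+ 4 + 2)) Z10s.
Proof. vm_compute. reflexivity. Qed.
Lemma Z5_ok : all (fun k : 'Z_10 => (((0, k + 1) : vertex) != (0, k - 1)) && (rung (0, k - 1) != (0, k))) Z10s.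
Proof. vm_compute. reflexivity. Qed.

Lemma nbrsE x : nbrs x = [:: (x.1, x.2 + 1); (x.1, x.2 - 1); rung x].
Proof. by []. Qed.

Lemma nbrsP n k : nbrs (n, k) = [:: (n, k + 1); (n, k - 1); rung (n, k)].
Proof. by []. Qed.
Lemma rungP n k : rung (n, k) =
  if odd k then (n + 1, k *+ 2) else (n - 1, k *+ 3 + 5).
Proof. by []. Qed.

Lemma adjE x y : adj x y <-> adjb x y.
Proof.
split.
- case => [[[n [k [-> ->]]] | [n [k [-> ->]]]] | [[n [k [-> ->]]] | [n [k [-> ->]]]]].
  + by rewrite /adjb /v nbrsP !inE eqxx.
  + have /andP[Ho He] := allZ Z1_ok k.
    rewrite /adjb /v nbrsP rungP (_ : odd _ = true); last exact: Ho.
    by rewrite (eqP He) !inE eqxx !orbT.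
  + by rewrite /adjb /v nbrsP addrK !inE eqxx !orbT.
  + have /andP[Ho He] := allZ Z2_ok k.
    rewrite /adjb /v nbrsP rungP (_ : odd _ = false); last exact: negbTE Ho.
    by rewrite (eqP He) addrK !inE eqxx !orbT.
- case: x => n k; rewrite /adjb nbrsP !inE => /or3P [] /eqP ->.
  + by left; left; exists n, k.
  + by right; left; exists n, (k - 1); rewrite /v subrK.
  + rewrite rungP; case: ifP => Ho.
    * have /andP[H1 H2] := implyP (allZ Z3_ok k) Ho.
      left; right; exists n, ((k - 1) *+ 3); by rewrite /v (eqP H1) (eqP H2).
    * have /andP[H1 H2] := implyP (allZ Z4_ok k) (negbT Ho).
      right; right; exists (n - 1), ((k *+ 3 + 4) *+ 3).
      by rewrite /v (eqP H1) -(eqP H2) subrK.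
Qed.

Definition Auto (f : vertex -> vertex) :=
  bijective f /\ forall x y, adjb (f x) (f y) = adjb x y.

Lemma cyc8_map f : injective f -> (forall x y, adjb (f x) (f y) = adjb x y) ->
  forall u, cyc8 (map f u) = cyc8 u.
Proof.
move=> inj Hf u; rewrite /cyc8 size_map (map_inj_uniq inj) cycle_map.
congr [&& _, _ & _]; apply: eq_cycle => x y /=; exact: Hf.
Qed.

Definition P4 w a b c := exists t, cyc8 ([:: w; a; b; c] ++ t).

Lemma P4_auto f w a b c : Auto f -> P4 (f w) (f a) (f b) (f c) <-> P4 w a b c.
Proof.
case=> [[g fK gK] Hf]; have inj := can_inj fK.
split=> [[t Ht] | [t Ht]].
- exists (map g t); rewrite -(cyc8_map inj Hf) map_cat (mapK gK); exact: Ht.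
- exists (map f t).
  have -> : [:: f w; f a; f b; f c] ++ map f t = map f ([:: w; a; b; c] ++ t) by [].
  by rewrite cyc8_map.
Qed.

Lemma walksS m x : walks m.+1 x =
  flatten [seq [seq y :: t | t <- walks m y] | y <- nbrs x].
Proof. by []. Qed.

Lemma walksP x t : path adjb x t -> t \in walks (size t) x.
Proof.
elim: t x => [|y t IH] x; first by rewrite inE.
move=> /andP[Hxy Ht]; rewrite (walksS (size t)); apply/flattenP.
exists [seq y :: t' | t' <- walks (size t) y]; first by apply/mapP; exists y.
exact: (map_f (cons y) (IH _ Ht)).
Qed.

Lemma P4_Pb w a b c : P4 w a b c -> Pb4 w a b c.
Proof.
case=> t Ht.
have [St Hp] : size t = 4%N /\ path adjb c t.
  move: Ht; rewrite /cyc8 /= => /and3P [Hs _ Hc].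
  move: Hc; rewrite rcons_path => /and4P [_ _ _ /andP [Hp _]].
  by split => //; move: Hs; rewrite !eqSS => /eqP.
apply/hasP; exists t => //.
by have := walksP Hp; rewrite St.
Qed.

Lemma Pb_P4 w a b c : Pb4 w a b c -> P4 w a b c.
Proof. by move/hasP => [t _ Ht]; exists t. Qed.

Definition tr (n : int) (x : vertex) : vertex := (n + x.1, x.2).
Arguments tr : simpl never.

Lemma trK n : cancel (tr n) (tr (- n)).
Proof. by case=> m k; rewrite /tr /= addKr. Qed.
Lemma trKV n : cancel (tr (- n)) (tr n).
Proof. by case=> m k; rewrite /tr /= addNKr. Qed.
Lemma tr_inj n : injective (tr n).
Proof. exact: can_inj (trK n). Qed.

Lemma nbrs_tr n x : nbrs (tr n x) = map (tr n) (nbrs x).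
Proof.
case: x => m k; rewrite !nbrsE /rung /tr /=; case: (odd k); by rewrite /= !addrA.
Qed.

Lemma adjb_tr n x y : adjb (tr n x) (tr n y) = adjb x y.
Proof. by rewrite /adjb nbrs_tr mem_map //; exact: tr_inj. Qed.

Lemma Auto_tr n : Auto (tr n).
Proof. split; [exact: Bijective (trK n) (trKV n) | exact: adjb_tr]. Qed.

Lemma tr0 n k : tr n (0, k) = (n, k).
Proof. by rewrite /tr /= addr0. Qed.

Lemma step th n k : Auto th ->
  th (tr n (0, k - 1)) = tr n (0, k - 1) -> th (tr n (0, k)) = tr n (0, k) ->
  th (tr n (0, k + 1)) = tr n (0, k + 1).
Proof.
move=> Hth HA HB; have [[g thK gK] Hadj] := Hth; have thinj := can_inj thK.
have : adjb (th (tr n (0, k))) (th (tr n (0, k + 1))).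
  by rewrite Hadj adjb_tr /adjb nbrsE !inE eqxx.
rewrite HB /adjb nbrs_tr nbrsE /= !inE => /or3P [] /eqP E //.
- exfalso; rewrite -HA in E; move/thinj/tr_inj: E => E.
  by move: (allZ Z5_ok k); rewrite E eqxx.
- exfalso.
  set r0 := rung (0, k - 1).
  set W := g (tr n r0).
  have HW : th W = tr n r0 by rewrite /W gK.
  set w0 := tr (- n) W.
  have Ew : W = tr n w0 by rewrite /w0 trKV.
  have Hw0 : adjb (0, k - 1) w0.
    by rewrite -(adjb_tr n) -Ew -Hadj HW HA adjb_tr /adjb nbrsE !inE eqxx !orbT.
  have Hne : w0 != (0, k).
    apply/eqP => E0; have : th W = th (tr n (0, k)) by rewrite Ew E0.
    rewrite HW HB => /tr_inj E1.
    by move: (allZ Z5_ok k); rewrite /r0 in E1; rewrite E1 eqxx andbF.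
  have := allP (allZ F2_ok k) w0 Hw0; rewrite (negbTE Hne) /= => /Pb_P4 HP.
  have HP2 : P4 W (tr n (0, k - 1)) (tr n (0, k)) (tr n (0, k + 1)).
    by rewrite Ew; apply/(P4_auto _ _ _ _ (Auto_tr n)).
  move/(P4_auto _ _ _ _ Hth): HP2; rewrite HW HA HB E.
  move/(P4_auto _ _ _ _ (Auto_tr n))/P4_Pb => HP3.
  by move: (allZ F1_ok k); rewrite /bodyF1 HP3.
Qed.

Lemma step' th n k : Auto th -> th (n, k - 1) = (n, k - 1) -> th (n, k) = (n, k) ->
  th (n, k + 1) = (n, k + 1).
Proof. by move=> Hth; have := @step th n k Hth; rewrite !tr0. Qed.

Definition layerfix (th : vertex -> vertex) (n : int) := forall k : 'Z_10, th (n, k) = (n, k).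

Lemma layer th n k : Auto th -> th (n, k - 1) = (n, k - 1) -> th (n, k) = (n, k) ->
  layerfix th n.
Proof.
move=> Hth H1 H2.
have H : forall j : nat, th (n, k + j%:R - 1) = (n, k + j%:R - 1) /\
                          th (n, k + j%:R) = (n, k + j%:R).
  elim=> [|j [IH1 IH2]]; first by rewrite mulr0n addr0.
  rewrite mulrSr addrA addrK; split => //; exact: step'.
move=> k'; have := (H (nat_of_ord (k' - k))).2.
by rewrite natr_Zp addrC subrK.
Qed.

Lemma forced_tr th n (Fx : pred vertex) y x : Auto th ->
  (forall z, Fx z -> th (tr n z) = tr n z) -> Fx y -> adjb y x ->
  all (fun z => (z == x) || Fx z) (nbrs y) -> th (tr n x) = tr n x.
Proof.
move=> [[g thK gK] Hadj] HF Fy Hyx Hall.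
have : adjb (th (tr n y)) (th (tr n x)) by rewrite Hadj adjb_tr.
rewrite HF // /adjb nbrs_tr => /mapP [z Hz Ez].
case/orP: (allP Hall z Hz) => [/eqP Ezx | Fz]; first by rewrite Ez Ezx.
have : th (tr n x) = th (tr n z) by rewrite Ez HF.
by move/(can_inj thK)/tr_inj => Exz; rewrite Ez -Exz.
Qed.

Lemma forced2_tr th n y1 y2 x : Auto th ->
  th (tr n y1) = tr n y1 -> th (tr n y2) = tr n y2 -> adjb y1 x -> adjb y2 x ->
  all (fun z => (z == x) || ~~ adjb y2 z) (nbrs y1) -> th (tr n x) = tr n x.
Proof.
move=> [[g thK gK] Hadj] H1 H2 H1x H2x Hall.
have : adjb (th (tr n y1)) (th (tr n x)) by rewrite Hadj adjb_tr.
rewrite H1 /adjb nbrs_tr => /mapP [z Hz Ez].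
have : adjb (th (tr n y2)) (th (tr n x)) by rewrite Hadj adjb_tr.
rewrite H2 Ez adjb_tr => Hz2.
case/orP: (allP Hall z Hz) => [/eqP Ezx | Fz]; first by rewrite Ezx.
by rewrite Hz2 in Fz.
Qed.

Ltac vmc := vm_compute; reflexivity.

Lemma up th n : Auto th -> layerfix th n -> layerfix th (n + 1).
Proof.
move=> Hth Hl.
have L0 : forall z : vertex, (fun z : vertex => z.1 == 0) z -> th (tr n z) = tr n z.
  by case=> m k /= /eqP ->; rewrite tr0 Hl.
have h1 : th (tr n (1, 0)) = tr n (1, 0).
  by apply: (forced_tr (y := (0, 5))) Hth L0 _ _ _; vmc.
have h2 : th (tr n (1, 2)) = tr n (1, 2).
  by apply: (forced_tr (y := (0, 1))) Hth L0 _ _ _; vmc.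
have h3 : th (tr n (1, 1)) = tr n (1, 1).
  by apply: (forced2_tr (y1 := (1, 0)) (y2 := (1, 2))) Hth h1 h2 _ _ _; vmc.
apply: (layer (k := 1)) Hth _ h3.
by rewrite subrr.
Qed.

Lemma down th n : Auto th -> layerfix th n -> layerfix th (n - 1).
Proof.
move=> Hth Hl.
have L0 : forall z : vertex, (fun z : vertex => z.1 == 0) z -> th (tr n z) = tr n z.
  by case=> m k /= /eqP ->; rewrite tr0 Hl.
have h1 : th (tr n (-1, 1)) = tr n (-1, 1).
  by apply: (forced_tr (y := (0, 2))) Hth L0 _ _ _; vmc.
have h2 : th (tr n (-1, 3)) = tr n (-1, 3).
  by apply: (forced_tr (y := (0, 6))) Hth L0 _ _ _; vmc.
have h3 : th (tr n (-1, 2)) = tr n (-1, 2).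
  by apply: (forced2_tr (y1 := (-1, 1)) (y2 := (-1, 3))) Hth h1 h2 _ _ _; vmc.
apply: (layer (k := 2)) Hth _ h3.
have e : (2 - 1 : 'Z_10) = 1 by apply/eqP; vmc.
by rewrite e.
Qed.

Lemma allfix th : Auto th -> layerfix th 0 -> forall x, th x = x.
Proof.
move=> Hth H0.
have Hup : forall m : nat, layerfix th m.
  elim=> // m IH; rewrite -addn1 PoszD; exact: up.
have Hdn : forall m : nat, layerfix th (- (m%:Z)).
  elim=> [|m IH]; first by rewrite oppr0.
  rewrite -addn1 PoszD opprD; exact: down.
case=> [[m|m] k]; first exact: Hup.
rewrite NegzE; exact: Hdn.
Qed.

Lemma adjb_iff f : (forall x y, adj x y <-> adj (f x) (f y)) ->
  forall x y, adjb (f x) (f y) = adjb x y.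
Proof.
move=> H x y; apply/idP/idP => Hb.
- by apply/adjE; apply/(H x y); apply/adjE.
- by apply/adjE; apply/(H x y); apply/adjE.
Qed.

Theorem mainTheorem5 (phi psi : vertex -> vertex) :
  is_automorphism phi -> is_automorphism psi ->
  phi (v 0 1) = psi (v 0 1) -> phi (v 0 2) = psi (v 0 2) ->
  forall x : vertex, phi x = psi x.
Proof.
move=> [bphi Hphi] [bpsi Hpsi] E1 E2 x.
case: bpsi (bpsi) => g psiK gK bpsi.
have Hth : Auto (g \o phi).
  split; first by apply: bij_comp => //; exists psi.
  move=> y z /=; rewrite -(adjb_iff Hpsi) !gK; exact: adjb_iff.
have F1 : (g \o phi) (0, 1) = (0, 1) by rewrite /= E1 psiK.
have F2 : (g \o phi) (0, 2) = (0, 2) by rewrite /= E2 psiK.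
have L := layer (k := 2) Hth.
have e : (2 - 1 : 'Z_10) = 1 by apply/eqP; vmc.
rewrite e in L.
have := allfix Hth (L 0 F1 F2) x.
by move=> /= H; rewrite -{2}H gK.
Qed.
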